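(* Fix integers $h\ge0$ and $k\ge1$. For a function $\pi:[h]\to[k]$ and $i\in[k]$ let $h_i(\pi)=|\{q\in[h]:\pi(q)=i\}|$. Then for any $C\ge3$, $$\sum_{\pi:[h]\to[k]}\frac{\prod_{i=1}^kh_i(\pi)^{Ch_i(\pi)}}{h^{Ch}}\le\max\Big\{k^7,\ (hk+1)\exp\!\Big(\frac{2k}{h^{C-1}}\Big)\Big\},$$ with the convention $0^0=1$. *)

(* Defs.v *)
From HB Require Import structures.
From mathcomp Require Import all_boot all_order all_algebra.
From mathcomp Require Import all_classical all_reals all_analysis.
Set Implicit Arguments. Unset Strict Implicit. Unset Printing Implicit Defensive.
Import Order.TTheory GRing.Theory Num.Theory.
Local Open Scope ring_scope.

Definition fiber_size (h k : nat) (pi : {ffun 'I_h -> 'I_k}) (i : 'I_k) : nat :=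
  #|[set q | pi q == i]|.

(* Main.v *)
Require Import Defs.
From HB Require Import structures.
From mathcomp Require Import all_boot all_order all_algebra.
From mathcomp Require Import all_classical all_reals all_analysis.
From mathcomp Require Import zify ring lra.
Import Order.TTheory GRing.Theory Num.Theory.
Local Open Scope ring_scope.

Module Aux.
Set Implicit Arguments. Unset Strict Implicit. Unset Printing Implicit Defensive.

Section Helpers.
Variable R : realType.

Lemma powR_prod (I : finType) (P : pred I) (F : I -> R) (r : R) :
  (forall i, 0 <= F i) ->
  powR (\prod_(i | P i) F i) r = \prod_(i | P i) powR (F i) r.
Proof.
move=> F0.
suff [] : 0 <= \prod_(i | P i) F i /\ powR (\prod_(i | P i) F i) r = \prod_(i | P i) powR (F i) r by [].
apply: (big_ind2 (fun x y => 0 <= x /\ powR x r = y)).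
- by rewrite powR1.
- move=> x1 x2 y1 y2 [x10 <-] [y10 <-]; split; first exact: mulr_ge0.
  by rewrite powRM.
- by move=> i _; split.
Qed.

Lemma powR_invx (x r : R) : 0 < x -> powR x^-1 r = (powR x r)^-1.
Proof.
move=> x0; rewrite /powR !gt_eqF ?invr_gt0// lnV ?posrE// mulrN expRN.
by [].
Qed.

Lemma powR_le1 (x r : R) : 0 <= x <= 1 -> 0 <= r -> powR x r <= 1.
Proof.
move=> /andP[x0 x1] r0.
have := ge0_ler_powR r0 _ _ x1; rewrite powR1; apply; by rewrite ?nnegrE.
Qed.

End Helpers.

Lemma fiber_sum (h k : nat) (pi : {ffun 'I_h -> 'I_k}) :
  (\sum_(i < k) fiber_size pi i)%N = h.
Proof.
rewrite /fiber_size.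
rewrite -[RHS]card_ord -sum1_card (partition_big pi predT) //=.
by apply: eq_bigr => i _; rewrite cardsE -sum1_card.
Qed.

Lemma fiber_prod (R : comNzRingType) (h k : nat) (pi : {ffun 'I_h -> 'I_k}) (p : 'I_k -> R) :
  \prod_(q < h) p (pi q) = \prod_(i < k) p i ^+ fiber_size pi i.
Proof.
rewrite (partition_big pi predT) //=.
apply: eq_bigr => i _.
rewrite (eq_bigr (fun _ => p i)); last by move=> q /eqP ->.
by rewrite prodr_const /fiber_size cardsE.
Qed.


Lemma term_eq (R : realType) (h k : nat) (C : R) (pi : {ffun 'I_h -> 'I_k}) :
  (0 < h)%N -> 0 < C ->
  (\prod_(i < k) powR (fiber_size pi i)%:R (C * (fiber_size pi i)%:R))
        / powR h%:R (C * h%:R)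
  = (\prod_(i < k) (((fiber_size pi i)%:R / h%:R) ^+ fiber_size pi i))
    * \prod_(i < k) powR (((fiber_size pi i)%:R / h%:R) ^+ fiber_size pi i) (C - 1).
Proof.
move=> h0 C0.
have hR : 0 < (h%:R : R) by rewrite ltr0n.
have E (n : nat) : powR (n%:R : R) (C * n%:R) = powR (n%:R ^+ n) C.
  by rewrite mulrC powRrM powR_mulrn.
rewrite (eq_bigr (fun i => powR ((fiber_size pi i)%:R ^+ fiber_size pi i) C));
  last by move=> i _; rewrite E.
rewrite E -powR_prod; last by move=> i; rewrite exprn_ge0.
have -> : (h%:R : R) ^+ h = \prod_(i < k) (h%:R ^+ fiber_size pi i).
  by rewrite prodrXr fiber_sum.
rewrite -powR_invx; last by apply: prodr_gt0 => i _; rewrite exprn_gt0.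
rewrite -powRM ?invr_ge0; last 2 first.
- by apply: prodr_ge0 => i _; rewrite exprn_ge0.
- by apply: prodr_ge0 => i _; rewrite exprn_ge0.
rewrite -prodf_div.
rewrite (eq_bigr (fun i => ((fiber_size pi i)%:R / h%:R) ^+ fiber_size pi i));
  last by move=> i _; rewrite expr_div_n.
rewrite -powR_prod; last by move=> i; rewrite exprn_ge0 ?divr_ge0.
rewrite mulr_powRB1 //.
by apply: prodr_ge0 => i _; rewrite exprn_ge0 ?divr_ge0.
Qed.


Lemma sq_le_pow2 a : (4 <= a)%N -> (a * a <= 2 ^ a)%N.
Proof.
elim: a => [//|a IH] Ha.
case: (ltngtP a 4) => [Hlt|Hgt|Heq].
- have -> : a = 3 by lia. by [].
- have := IH (ltnW Hgt). rewrite expnS. nia.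
- by rewrite Heq.
Qed.


Lemma aa_le b h : ((b.+1).*2 <= h)%N -> (b.+1 ^ b.+1 <= h ^ b)%N.
Proof.
move=> Hh.
have H1 : ((b.+1).*2 ^ b <= h ^ b)%N.
  by case: b Hh => [|b] Hh //; rewrite leq_exp2r.
apply: leq_trans H1.
rewrite -mul2n expnMn expnS leq_mul2r; apply/orP; right.
exact: (ltn_expl b (isT : (1 < 2)%N)).
Qed.

Lemma big_a b h : (4 <= b)%N -> ((b.+1).*2 <= h)%N ->
  ((b.+1 ^ b.+1) * (b.+1 ^ b.+1) * 2 ^ b.+1 <= 4 * ((h ^ b) * (h ^ b)))%N.
Proof.
move=> Hb Hh.
have H1 : ((b.+1).*2 ^ b <= h ^ b)%N.
  by case: b Hb Hh => [|b] _ Hh //; rewrite leq_exp2r.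
have H2 : (((b.+1).*2 ^ b) * ((b.+1).*2 ^ b) <= (h ^ b) * (h ^ b))%N by apply: leq_mul.
apply: leq_trans (leq_mul (leqnn 4) H2).
rewrite -mul2n !expnMn !expnS.
have := @sq_le_pow2 b.+1 (ltnW Hb).
rewrite expnS.
set x := (b.+1 ^ b)%N. set y := (2 ^ b)%N.
move=> H.
have -> : (b.+1 * x * (b.+1 * x) * (2 * y) = (b.+1 * b.+1) * (2 * y) * (x * x))%N by ring.
have -> : (4 * (y * x * (y * x)) = (2 * y) * (2 * y) * (x * x))%N by ring.
by rewrite leq_mul2r; apply/orP; right; rewrite leq_mul2r H orbT.
Qed.


Definition phi (R : realType) (h : nat) (D : R) (a : nat) : R :=
  if (a.*2 <= h)%N then powR (((a%:R / h%:R) ^+ a)) D else 0.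

Definition un (a : nat) : nat :=
  if a == 2%N then 1%N else if a == 3%N then 3%N else if a == 4%N then 1%N else 4%N.
Definition ud (a : nat) : nat :=
  if a == 2%N then 4%N else if a == 3%N then 16%N else if a == 4%N then 4%N else (2 ^ a)%N.

Lemma frac_sq (R : realType) (A B n d : nat) : (0 < B)%N -> (0 < d)%N ->
  (A * A * d <= n * (B * B))%N -> (A%:R / B%:R) ^+ 2 <= n%:R / d%:R :> R.
Proof.
move=> B0 d0 H.
rewrite expr_div_n ler_pdivrMr ?exprn_gt0 ?ltr0n // mulrAC ler_pdivlMr ?ltr0n //.
by rewrite -!natrX -!natrM ler_nat !expnS expn0 !muln1.
Qed.

Lemma term_bound (R : realType) (h a : nat) (D : R) :
  (8 <= h)%N -> 2 <= D -> (2 <= a)%N ->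
  phi h D a <= (un a)%:R / (ud a)%:R * powR (h%:R^-1) D.
Proof.
move=> h8 D2 a2.
have hR : 0 < (h%:R : R) by rewrite ltr0n; lia.
have y0 : 0 <= powR (h%:R^-1 : R) D by exact: powR_ge0.
rewrite /phi; case: ifP => Ha; last first.
  by apply: mulr_ge0 => //; apply: divr_ge0; apply: ler0n.
case: a a2 Ha => [//|b] b1 Ha.
set x : R := (b.+1)%:R ^+ b.+1 / h%:R ^+ b.
have Ex : ((b.+1)%:R / h%:R) ^+ b.+1 = x * h%:R^-1 :> R.
  by rewrite /x expr_div_n -mulrA -invfM -exprSr.
have x0 : 0 < x by apply: divr_gt0; rewrite exprn_gt0 // ltr0n.
have x1 : x <= 1.
  rewrite /x ler_pdivrMr ?exprn_gt0 // mul1r -!natrX ler_nat.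
  exact: aa_le.
rewrite Ex powRM ?invr_ge0 ?(ltW x0) ?(ltW hR) //.
apply: ler_wpM2r => //.
apply: (le_trans (ger_powR _ D2)); first by rewrite x0 x1.
rewrite powR_mulrn ?(ltW x0) //.
rewrite /x -!natrX.
apply: frac_sq; first by rewrite expn_gt0; lia.
  rewrite /ud; case: ifP => //; case: ifP => //; case: ifP => //.
  by rewrite expn_gt0.
rewrite /un /ud.
case: b b1 Ha {x Ex x0 x1} => [//|b] _ Ha.
case: b Ha => [|b] Ha /=.
  rewrite !expnS !expn0 !muln1; nia.
case: b Ha => [|b] Ha /=.
  rewrite !expnS !expn0 !muln1; nia.
case: b Ha => [|b] Ha /=.
  rewrite !expnS !expn0 !muln1; nia.
rewrite mulnA.
have := @big_a b.+4 h isT Ha. by rewrite mulnA.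
Qed.

Lemma usum_eq (R : realType) m :
  \sum_(2 <= a < m.+4.+1) (un a)%:R / (ud a)%:R = 15%:R / 16%:R - 8%:R / (2 ^ m.+4.+1)%:R :> R.
Proof.
elim: m => [|m IH].
  rewrite big_nat_recr //= big_nat_recr //= big_nat_recr //= big_geq // /un /ud /=.
  by rewrite !natrX; field.
rewrite big_nat_recr //= IH /un /ud /=.
rewrite !natrX (exprS _ (m.+1.+4)).
have t : (2 : R) ^+ m.+4.+1 != 0 by rewrite expf_neq0 // pnatr_eq0.
field; exact: t.
Qed.

Lemma usum (R : realType) n :
  \sum_(2 <= a < n) (un a)%:R / (ud a)%:R <= 1 :> R.
Proof.
have u0 a : 0 <= (un a)%:R / (ud a)%:R :> R by rewrite divr_ge0 ?ler0n.
case: (ltnP n 2) => Hn.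
  by rewrite big_geq ?ler01 //; lia.
apply: (@le_trans _ _ (\sum_(2 <= a < n.+4.+1) (un a)%:R / (ud a)%:R)).
  rewrite (@big_cat_nat _ _ _ n 2 n.+4.+1) //=; last by do 5 apply: leqW.
  rewrite lerDl; apply: sumr_ge0 => a _; exact: u0.
rewrite usum_eq lerBlDr.
have : 0 <= 8%:R / (2 ^ n.+4.+1)%:R :> R by rewrite divr_ge0 ?ler0n.
lra.
Qed.

Lemma sigma_bound (R : realType) (h : nat) (D : R) :
  (8 <= h)%N -> 2 <= D ->
  \sum_(a < h.+1) phi h D a <= 1 + 2 * powR (h%:R^-1) D.
Proof.
move=> h8 D2.
have hR : 0 < (h%:R : R) by rewrite ltr0n; lia.
set y := powR (h%:R^-1 : R) D.
have y0 : 0 <= y by exact: powR_ge0.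
rewrite -(big_mkord xpredT) big_ltn // big_ltn; last by lia.
have -> : phi h D 0 = 1.
  by rewrite /phi /= expr0 powR1.
have -> : phi h D 1 = y.
  rewrite /phi ifT; last by rewrite /=; lia.
  by rewrite expr1 div1r.
rewrite lerD2l mulr_natl mulr2n lerD2l.
apply: (@le_trans _ _ (\sum_(2 <= a < h.+1) (un a)%:R / (ud a)%:R * y)).
  apply: ler_sum_nat => a /andP[a2 _].
  exact: term_bound.
rewrite -mulr_suml -[X in _ <= X]mul1r.
apply: ler_wpM2r => //.
exact: usum.
Qed.


Lemma fiber_le (h k : nat) (pi : {ffun 'I_h -> 'I_k}) i : (fiber_size pi i <= h)%N.
Proof. by rewrite /fiber_size -[X in (_ <= X)%N]card_ord max_card. Qed.

Lemma fiber_pair (h k : nat) (pi : {ffun 'I_h -> 'I_k}) i j :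
  i != j -> (fiber_size pi i + fiber_size pi j <= h)%N.
Proof.
move=> ij.
rewrite -[X in (_ <= X)%N](fiber_sum pi) (bigD1 j) //= (bigD1 i) //= addnA.
by rewrite [(fiber_size pi j + _)%N]addnC leq_addr.
Qed.

Definition Wt (R : realType) (h k : nat) (pi : {ffun 'I_h -> 'I_k}) : R :=
  \prod_(i < k) (((fiber_size pi i)%:R / h%:R) ^+ fiber_size pi i).

Definition Hj (R : realType) (h k : nat) (D : R) (j : 'I_k) (pi : {ffun 'I_h -> 'I_k}) : R :=
  \prod_(i < k | i != j) phi h D (fiber_size pi i).

Lemma phi_ge0 (R : realType) h (D : R) a : 0 <= phi h D a.
Proof. by rewrite /phi; case: ifP => _ //; exact: powR_ge0. Qed.

Lemma core (R : realType) (h k : nat) (D : R) (j : 'I_k) : (0 < h)%N ->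
  \sum_(pi : {ffun 'I_h -> 'I_k}) Wt R pi * Hj D j pi
    <= (\sum_(a < h.+1) phi h D a) ^+ k.-1.
Proof.
move=> h0.
have hR : 0 < (h%:R : R) by rewrite ltr0n.
pose typ (pi : {ffun 'I_h -> 'I_k}) : {ffun 'I_k -> 'I_h.+1} :=
  [ffun i => if i == j then ord0 else inord (fiber_size pi i)].
pose g (i : 'I_k) (a : 'I_h.+1) : R := if i == j then (a == ord0)%:R else phi h D a.
have g0 i a : 0 <= g i a by rewrite /g; case: ifP => _; rewrite ?ler0n ?phi_ge0.
rewrite (partition_big typ predT) //=.
apply: (@le_trans _ _ (\sum_(s : {ffun 'I_k -> 'I_h.+1}) \prod_(i < k) g i (s i))).
  apply: ler_sum => s _.
  case: (pickP (fun pi => typ pi == s)) => [pi0 Hpi0 | Hnone]; last first.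
    rewrite big_pred0; last by move=> pi; rewrite Hnone.
    by apply: prodr_ge0 => i _.
  have Hc pi : typ pi == s -> forall i, fiber_size pi i = fiber_size pi0 i.
    move=> /eqP Hpi.
    have Hne i : i != j -> fiber_size pi i = fiber_size pi0 i.
      move=> ij.
      have := congr1 (fun f : {ffun 'I_k -> 'I_h.+1} => nat_of_ord (f i)) Hpi.
      rewrite -(eqP Hpi0) /typ !ffunE (negPf ij) /= !inordK //;
        by rewrite ltnS fiber_le.
    move=> i; case: (eqVneq i j) => [->|ij]; last exact: Hne.
    have : (\sum_(l < k) fiber_size pi l = \sum_(l < k) fiber_size pi0 l)%N.
      by rewrite !fiber_sum.
    rewrite (bigD1 j) //= [in RHS](bigD1 j) //=.
    rewrite (eq_bigr (fun i => fiber_size pi0 i)); last by move=> l lj; rewrite Hne.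
    by move/addIn.
  pose p (i : 'I_k) : R := (fiber_size pi0 i)%:R / h%:R.
  have p0 i : 0 <= p i by rewrite /p divr_ge0 ?ler0n.
  have Hg : \prod_(i < k) g i (s i) = Hj D j pi0.
    rewrite -(eqP Hpi0) (bigD1 j) //= /g /typ ffunE !eqxx mul1r /Hj.
    apply: eq_bigr => i ij; rewrite ffunE (negPf ij) inordK //.
    by rewrite ltnS fiber_le.
  rewrite Hg.
  rewrite (eq_bigr (fun pi : {ffun 'I_h -> 'I_k} => (\prod_(q < h) p (pi q)) * Hj D j pi0)); last first.
    move=> pi Hpi; rewrite fiber_prod /Wt /Hj.
    congr (_ * _); apply: eq_bigr => i _; by rewrite /p !(Hc pi Hpi).
  rewrite -mulr_suml -[X in _ <= X]mul1r.
  apply: ler_wpM2r; first by apply: prodr_ge0 => i _; exact: phi_ge0.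
  apply: (@le_trans _ _ (\sum_(pi : {ffun 'I_h -> 'I_k}) \prod_(q < h) p (pi q))).
    rewrite [X in _ <= X](bigID (fun pi => typ pi == s)) /= lerDl.
    by apply: sumr_ge0 => pi _; apply: prodr_ge0 => q _.
  rewrite -(bigA_distr_bigA (fun (q : 'I_h) (i : 'I_k) => p i)) /=.
  have -> : \sum_(i < k) p i = 1.
    by rewrite /p -mulr_suml -natr_sum fiber_sum divff // gt_eqF.
  by rewrite prodr_const expr1n.
rewrite -(bigA_distr_bigA g) (bigD1 j) //=.
have -> : \sum_(a < h.+1) g j a = 1.
  rewrite (eq_bigr (fun a : 'I_h.+1 => (a == ord0)%:R)); last by move=> a _; rewrite /g eqxx.
  rewrite (bigD1 ord0) //= big1 ?addr0 // => a /negPf ->. by [].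
rewrite mul1r.
rewrite (eq_bigr (fun _ => \sum_(a < h.+1) phi h D a)); last first.
  by move=> i ij; apply: eq_bigr => a _; rewrite /g (negPf ij).
rewrite prodr_const cardC1 card_ord.
by [].
Qed.


Lemma q_in01 (R : realType) (h k : nat) (pi : {ffun 'I_h -> 'I_k}) i : (0 < h)%N ->
  0 <= (((fiber_size pi i)%:R / h%:R : R) ^+ fiber_size pi i) <= 1.
Proof.
move=> h0; have hR : 0 < (h%:R : R) by rewrite ltr0n.
have c0 : 0 <= (fiber_size pi i)%:R / h%:R :> R by rewrite divr_ge0 ?ler0n.
rewrite exprn_ge0 //= exprn_ile1 //.
by rewrite ler_pdivrMr // mul1r ler_nat fiber_le.
Qed.

Lemma term_le (R : realType) (h k : nat) (C : R) (pi : {ffun 'I_h -> 'I_k}) :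
  (0 < h)%N -> 3 <= C -> (0 < k)%N ->
  (\prod_(i < k) powR (fiber_size pi i)%:R (C * (fiber_size pi i)%:R))
        / powR h%:R (C * h%:R)
  <= Wt R pi * \sum_(j < k) Hj (C - 1) j pi.
Proof.
move=> h0 C3 k0.
rewrite term_eq //; last by lra.
apply: ler_wpM2l.
  by apply: prodr_ge0 => i _; case/andP: (q_in01 R pi i h0).
case: (arg_maxnP (fun i => fiber_size pi i) (isT : predT (Ordinal k0))) => j0 _ Hj0.
rewrite (bigD1 j0) //=.
apply: (@le_trans _ _ (Hj (C - 1) j0 pi)).
  have -> : Hj (C - 1) j0 pi =
     \prod_(i < k | i != j0) powR (((fiber_size pi i)%:R / h%:R) ^+ fiber_size pi i) (C - 1).
    rewrite /Hj; apply: eq_bigr => i ij; rewrite /phi ifT //.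
    rewrite -addnn; apply: leq_trans (fiber_pair pi ij).
    by rewrite leq_add2l; exact: Hj0.
  apply: ler_piMl; first by apply: prodr_ge0 => i _; exact: powR_ge0.
  apply: powR_le1; first exact: q_in01.
  lra.
rewrite (bigD1 j0) //= lerDl.
by apply: sumr_ge0 => j _; apply: prodr_ge0 => i _; exact: phi_ge0.
Qed.

End Aux.
Import Aux.

Theorem lemmaB4 (R : realType) (h k : nat) (C : R) :
  (1 <= k)%N -> 3 <= C ->
  \sum_(pi : {ffun 'I_h -> 'I_k})
     ((\prod_(i < k) powR (fiber_size pi i)%:R (C * (fiber_size pi i)%:R))
        / powR h%:R (C * h%:R))
  <= Num.max ((k%:R : R) ^+ 7)
       ((h * k + 1)%:R * expR (2 * k%:R / powR h%:R (C - 1))).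
Proof.
move=> k1 C3.
case: (leqP h 7) => Hh.
  rewrite le_max; apply/orP; left.
  apply: (@le_trans _ _ (\sum_(pi : {ffun 'I_h -> 'I_k}) (1 : R))).
    apply: ler_sum => pi _.
    case: (posnP h) => [h0|h0].
      subst h.
      have E i : fiber_size pi i = 0%N by apply/eqP; rewrite -leqn0 fiber_le.
      rewrite big1; last by move=> i _; rewrite E mulr0 powRr0.
      by rewrite mulr0 powRr0 divr1.
    rewrite term_eq //; last by lra.
    apply: mulr_ile1.
    - by apply: prodr_ge0 => i _; case/andP: (q_in01 R pi i h0).
    - by apply: prodr_ge0 => i _; exact: powR_ge0.
    - by apply: prodr_ile1 => i _; exact: q_in01.
    - apply: prodr_ile1 => i _; rewrite powR_ge0 /=.
      apply: powR_le1; first exact: q_in01.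
      lra.
  rewrite sumr_const card_ffun !card_ord -natrX ler_nat.
  exact: leq_pexp2l.
rewrite le_max; apply/orP; right.
have h0 : (0 < h)%N by lia.
have hR : 0 < (h%:R : R) by rewrite ltr0n.
set y := powR (h%:R^-1 : R) (C - 1).
have y0 : 0 <= y by exact: powR_ge0.
set sig := \sum_(a < h.+1) phi h (C - 1) a.
have sig0 : 0 <= sig by apply: sumr_ge0 => a _; exact: phi_ge0.
have Hsig : sig <= 1 + 2 * y.
  apply: sigma_bound; first by lia.
  lra.
apply: (@le_trans _ _ (\sum_(pi : {ffun 'I_h -> 'I_k})
                          Wt R pi * \sum_(j < k) Hj (C - 1) j pi)).
  apply: ler_sum => pi _; exact: term_le.
under eq_bigr do rewrite mulr_sumr.
rewrite exchange_big /=.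
apply: (@le_trans _ _ (\sum_(j < k) sig ^+ k.-1)).
  by apply: ler_sum => j _; exact: core.
rewrite sumr_const card_ord -(mulr_natl (sig ^+ k.-1) k).
have Ey : 2 * k%:R / powR h%:R (C - 1) = k%:R * (2 * y).
  by rewrite /y powR_invx //; ring.
rewrite Ey.
apply: (@le_trans _ _ (k%:R * expR (k%:R * (2 * y)))); last first.
  apply: ler_wpM2r; first exact: expR_ge0.
  by rewrite ler_nat; nia.
apply: ler_wpM2l; first exact: ler0n.
apply: (@le_trans _ _ ((1 + 2 * y) ^+ k.-1)).
  by apply: lerXn2r; rewrite ?nnegrE //; lra.
apply: (@le_trans _ _ (expR (2 * y) ^+ k.-1)).
  apply: lerXn2r; rewrite ?nnegrE //; first lra.
    exact: expR_ge1Dx.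
rewrite -expRM_natl ler_expR.
apply: ler_wpM2r; first lra.
by rewrite ler_nat leq_pred.
Qed.
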